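(* Let $p,m,n\in\mathbb{R}$, $a,b,c\in\mathbb{O}$, and $$\mathcal{A}=\begin{pmatrix}p&a&\overline{b}\\ \overline{a}&m&c\\ b&\overline{c}&n\end{pmatrix}.$$ Suppose $v=(x,y,z)^T\in\mathbb{O}^3\setminus\{0\}$ and $\lambda\in\mathbb{O}$ satisfy $\mathcal{A}v=v\lambda$. Then $$\mathrm{Im}(\lambda)=\frac{[x,a,y]+[z,b,x]+[y,c,z]}{|x|^2+|y|^2+|z|^2},$$ and if moreover $|x|^2+|y|^2\neq|z|^2$, $$\mathrm{Re}(\lambda)=\frac{p|x|^2+m|y|^2-n|z|^2+2\,x\cdot(ay)}{|x|^2+|y|^2-|z|^2}.$$ In particular, if $|x|^2+|y|^2+|z|^2=1$ then $\mathrm{Im}(\lambda)=[x,a,y]+[z,b,x]+[y,c,z]$.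
   Context: $\mathbb{O}$ denotes the octonions, $\overline{a}$ conjugation, $\mathrm{Re}(a)=\frac12(a+\overline a)$, $\mathrm{Im}(a)=\frac12(a-\overline a)$, $|a|$ the norm, $[a,b,c]=(ab)c-a(bc)$ the associator, and $a\cdot b=\frac12(a\overline b+b\overline a)$ the Euclidean inner product of $\mathbb{R}^8$. $v\lambda$ means each component multiplied on the right by $\lambda$. *)

(* Defs.v *)
(* Octonions over a real field R, built by the Cayley-Dickson
   construction from Hamilton quaternions. *)
From HB Require Import structures.
From mathcomp Require Import all_boot all_order all_algebra.
Set Implicit Arguments. Unset Strict Implicit. Unset Printing Implicit Defensive.
Import Order.TTheory GRing.Theory Num.Theory.
Local Open Scope ring_scope.

Section Octonions.
Variable R : realFieldType.

Record quat := Quat { q0 : R; q1 : R; q2 : R; q3 : R }.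

Definition qzero : quat := Quat 0 0 0 0.
Definition qadd (a b : quat) : quat :=
  Quat (q0 a + q0 b) (q1 a + q1 b) (q2 a + q2 b) (q3 a + q3 b).
Definition qopp (a : quat) : quat := Quat (- q0 a) (- q1 a) (- q2 a) (- q3 a).
Definition qconj (a : quat) : quat := Quat (q0 a) (- q1 a) (- q2 a) (- q3 a).
Definition qmul (a b : quat) : quat :=
  Quat (q0 a * q0 b - q1 a * q1 b - q2 a * q2 b - q3 a * q3 b)
       (q0 a * q1 b + q1 a * q0 b + q2 a * q3 b - q3 a * q2 b)
       (q0 a * q2 b - q1 a * q3 b + q2 a * q0 b + q3 a * q1 b)
       (q0 a * q3 b + q1 a * q2 b - q2 a * q1 b + q3 a * q0 b).

(* Octonions as pairs (a, b) of quaternions, with the Cayley-Dickson product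
   (a,b)(c,d) = (a c - d^conj b, d a + b c^conj), conjugate (a,b)^conj = (a^conj, -b). *)
Record oct := Oct { olo : quat; ohi : quat }.

Definition ozero : oct := Oct qzero qzero.
Definition oreal (r : R) : oct := Oct (Quat r 0 0 0) qzero.
Definition oadd (x y : oct) : oct := Oct (qadd (olo x) (olo y)) (qadd (ohi x) (ohi y)).
Definition oopp (x : oct) : oct := Oct (qopp (olo x)) (qopp (ohi x)).
Definition osub (x y : oct) : oct := oadd x (oopp y).
Definition omul (x y : oct) : oct :=
  Oct (qadd (qmul (olo x) (olo y)) (qopp (qmul (qconj (ohi y)) (ohi x))))
      (qadd (qmul (ohi y) (olo x)) (qmul (ohi x) (qconj (olo y)))).
Definition oconj (x : oct) : oct := Oct (qconj (olo x)) (qopp (ohi x)).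
Definition oscale (r : R) (x : oct) : oct := omul (oreal r) x.

Definition ocoords (x : oct) : seq R :=
  [:: q0 (olo x); q1 (olo x); q2 (olo x); q3 (olo x);
      q0 (ohi x); q1 (ohi x); q2 (ohi x); q3 (ohi x)].

(* Re(a) = (a + a^conj)/2 is the real octonion with coordinate q0 (olo a);
   we record it as that real number. *)
Definition oRe (x : oct) : R := q0 (olo x).
Definition oIm (x : oct) : oct := oscale (2^-1) (osub x (oconj x)).
Definition onorm2 (x : oct) : R := \sum_(c <- ocoords x) c ^+ 2.
Definition odot (x y : oct) : R :=
  \sum_(c <- zip (ocoords x) (ocoords y)) c.1 * c.2.
Definition oassoc (a b c : oct) : oct :=
  osub (omul (omul a b) c) (omul a (omul b c)).

End Octonions.

Arguments ozero {R}.

(* Main.v *)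
Require Import Defs.
From mathcomp Require Import all_boot all_order all_algebra ring lra.
Import Order.TTheory GRing.Theory Num.Theory.
Local Open Scope ring_scope.
Set Implicit Arguments. Unset Strict Implicit.

Definition dd {R : realFieldType} (w : oct R) := osub w (oconj w).
Definition cf {R : realFieldType} (k : nat) (w : oct R) : R := nth 0 (ocoords w) k.

Ltac octd := repeat match goal with
  | o : oct _ |- _ => case: o => [[? ? ? ?] [? ? ? ?]]
  end.
Ltac ounf := cbv [dd cf ocoords nth oRe ozero oIm oassoc osub oscale oreal oadd oopp omul oconj qadd qopp qmul qconj qzero q0 q1 q2 q3 olo ohi].
Ltac octsolve := octd; ounf; congr (Oct (Quat _ _ _ _) (Quat _ _ _ _)); ring.

Section S.
Variable R : realFieldType.
Implicit Types u v w x y a : oct R.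

Lemma onorm2E x : onorm2 x = q0 (olo x) ^+ 2 + q1 (olo x) ^+ 2 + q2 (olo x) ^+ 2 + q3 (olo x) ^+ 2
  + q0 (ohi x) ^+ 2 + q1 (ohi x) ^+ 2 + q2 (ohi x) ^+ 2 + q3 (ohi x) ^+ 2.
Proof. rewrite /onorm2 /ocoords !big_cons big_nil; ring. Qed.

Lemma odotE x y : odot x y = q0 (olo x) * q0 (olo y) + q1 (olo x) * q1 (olo y) + q2 (olo x) * q2 (olo y) + q3 (olo x) * q3 (olo y)
  + q0 (ohi x) * q0 (ohi y) + q1 (ohi x) * q1 (ohi y) + q2 (ohi x) * q2 (ohi y) + q3 (ohi x) * q3 (ohi y).
Proof. rewrite /odot /ocoords /= !big_cons big_nil /=; ring. Qed.

Lemma onorm2_ge0 x : 0 <= onorm2 x.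
Proof. rewrite onorm2E; have := sqr_ge0; move=> h.
  repeat apply: addr_ge0; exact: sqr_ge0. Qed.

Lemma onorm2_eq0 x : onorm2 x = 0 -> x = ozero.
Proof.
rewrite onorm2E; case: x => [[x0 x1 x2 x3] [x4 x5 x6 x7]] /= H.
have s0 := sqr_ge0 x0; have s1 := sqr_ge0 x1; have s2 := sqr_ge0 x2; have s3 := sqr_ge0 x3.
have s4 := sqr_ge0 x4; have s5 := sqr_ge0 x5; have s6 := sqr_ge0 x6; have s7 := sqr_ge0 x7.
have e : forall t : R, 0 <= t ^+ 2 -> t ^+ 2 <= 0 -> t = 0.
  by move=> t h1 h2; apply/eqP; rewrite -sqrf_eq0 eq_le h1 h2.
rewrite /ozero /qzero; congr (Oct (Quat _ _ _ _) (Quat _ _ _ _)); apply: e => //; lra.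
Qed.

Lemma cf_add k u v : cf k (oadd u v) = cf k u + cf k v.
Proof. case: u v => [[? ? ? ?] [? ? ? ?]] [[? ? ? ?] [? ? ? ?]].
do 8 (case: k => [|k]; first by rewrite /cf /=). by rewrite /cf /= !nth_nil addr0. Qed.

Lemma cf_scale k r u : cf k (oscale r u) = r * cf k u.
Proof. case: u => [[? ? ? ?] [? ? ? ?]].
do 8 (case: k => [|k]; first by rewrite /cf /oscale /omul /=; ring). by rewrite /cf /= !nth_nil mulr0. Qed.

Lemma cf_zero k : cf k (@ozero R) = 0.
Proof. do 8 (case: k => [|k]; first by rewrite /cf /=). by rewrite /cf /= !nth_nil. Qed.

Lemma oct_ext u v : (forall k, (k < 8)%N -> cf k u = cf k v) -> u = v.
Proof.
case: u v => [[? ? ? ?] [? ? ? ?]] [[? ? ? ?] [? ? ? ?]] h.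
have := h 0%N isT; have := h 1%N isT; have := h 2%N isT; have := h 3%N isT;
have := h 4%N isT; have := h 5%N isT; have := h 6%N isT; have := h 7%N isT.
rewrite /cf /= => -> -> -> -> -> -> -> ->. by [].
Qed.

Lemma mulDr u v w : omul u (oadd v w) = oadd (omul u v) (omul u w).
Proof. octsolve. Qed.
Lemma ddD u v : dd (oadd u v) = oadd (dd u) (dd v).
Proof. octsolve. Qed.
Lemma ddsc r x : dd (omul (oconj x) (oscale r x)) = ozero.
Proof. octsolve. Qed.
Lemma ddF1 x lam : dd (omul (oconj x) (omul x lam)) = oscale (onorm2 x) (dd lam).
Proof. rewrite onorm2E; octsolve. Qed.

Lemma ReD u v : oRe (oadd u v) = oRe u + oRe v.
Proof. by []. Qed.
Lemma Resc r x : oRe (omul (oconj x) (oscale r x)) = r * onorm2 x.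
Proof. rewrite onorm2E; octd; ounf; ring. Qed.
Lemma ReF1 x lam : oRe (omul (oconj x) (omul x lam)) = onorm2 x * oRe lam.
Proof. rewrite onorm2E; octd; ounf; ring. Qed.
Lemma Re_swap x b z : oRe (omul (oconj x) (omul (oconj b) z)) = oRe (omul (oconj z) (omul b x)).
Proof. octd; ounf; ring. Qed.
Lemma Re_dot1 x a y : oRe (omul (oconj x) (omul a y)) = odot x (omul a y).
Proof. rewrite odotE; octd; ounf; ring. Qed.
Lemma Re_dot2 x a y : oRe (omul (oconj y) (omul (oconj a) x)) = odot x (omul a y).
Proof. rewrite odotE; octd; ounf; ring. Qed.
Lemma oIm_cf k (lam : oct R) : cf k (oIm lam) = 2^-1 * cf k (dd lam).
Proof. by rewrite /oIm cf_scale. Qed.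
Lemma cf_dd0 u : cf 0 (dd u) = 0.
Proof. case: u => [[? ? ? ?] [? ? ? ?]]; rewrite /cf /dd /=; ring. Qed.
End S.
Lemma pairL0 (R : realFieldType) (x a y : oct R) :
  cf 0 (oadd (dd (omul (oconj x) (omul a y))) (dd (omul (oconj y) (omul (oconj a) x)))) = cf 0 (oadd (oassoc x a y) (oassoc x a y)).
Proof. octd; ounf; ring. Qed.

Lemma pairL1 (R : realFieldType) (x a y : oct R) :
  cf 1 (oadd (dd (omul (oconj x) (omul a y))) (dd (omul (oconj y) (omul (oconj a) x)))) = cf 1 (oadd (oassoc x a y) (oassoc x a y)).
Proof. octd; ounf; ring. Qed.

Lemma pairL2 (R : realFieldType) (x a y : oct R) :
  cf 2 (oadd (dd (omul (oconj x) (omul a y))) (dd (omul (oconj y) (omul (oconj a) x)))) = cf 2 (oadd (oassoc x a y) (oassoc x a y)).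
Proof. octd; ounf; ring. Qed.

Lemma pairL3 (R : realFieldType) (x a y : oct R) :
  cf 3 (oadd (dd (omul (oconj x) (omul a y))) (dd (omul (oconj y) (omul (oconj a) x)))) = cf 3 (oadd (oassoc x a y) (oassoc x a y)).
Proof. octd; ounf; ring. Qed.

Lemma pairL4 (R : realFieldType) (x a y : oct R) :
  cf 4 (oadd (dd (omul (oconj x) (omul a y))) (dd (omul (oconj y) (omul (oconj a) x)))) = cf 4 (oadd (oassoc x a y) (oassoc x a y)).
Proof. octd; ounf; ring. Qed.

Lemma pairL5 (R : realFieldType) (x a y : oct R) :
  cf 5 (oadd (dd (omul (oconj x) (omul a y))) (dd (omul (oconj y) (omul (oconj a) x)))) = cf 5 (oadd (oassoc x a y) (oassoc x a y)).
Proof. octd; ounf; ring. Qed.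

Lemma pairL6 (R : realFieldType) (x a y : oct R) :
  cf 6 (oadd (dd (omul (oconj x) (omul a y))) (dd (omul (oconj y) (omul (oconj a) x)))) = cf 6 (oadd (oassoc x a y) (oassoc x a y)).
Proof. octd; ounf; ring. Qed.

Lemma pairL7 (R : realFieldType) (x a y : oct R) :
  cf 7 (oadd (dd (omul (oconj x) (omul a y))) (dd (omul (oconj y) (omul (oconj a) x)))) = cf 7 (oadd (oassoc x a y) (oassoc x a y)).
Proof. octd; ounf; ring. Qed.

Lemma pairL (R : realFieldType) (x a y : oct R) k :
  cf k (oadd (dd (omul (oconj x) (omul a y))) (dd (omul (oconj y) (omul (oconj a) x)))) = cf k (oadd (oassoc x a y) (oassoc x a y)).
Proof.
case: k => [|k]; first exact: pairL0.
case: k => [|k]; first exact: pairL1.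
case: k => [|k]; first exact: pairL2.
case: k => [|k]; first exact: pairL3.
case: k => [|k]; first exact: pairL4.
case: k => [|k]; first exact: pairL5.
case: k => [|k]; first exact: pairL6.
case: k => [|k]; first exact: pairL7.
by rewrite /cf /= !nth_nil.
Qed.

Lemma expand3 (R : realFieldType) (u v1 v2 v3 : oct R) :
  dd (omul u (oadd (oadd v1 v2) v3)) = oadd (oadd (dd (omul u v1)) (dd (omul u v2))) (dd (omul u v3)).
Proof. by rewrite !mulDr !ddD. Qed.
Lemma expandRe (R : realFieldType) (u v1 v2 v3 : oct R) :
  oRe (omul u (oadd (oadd v1 v2) v3)) = oRe (omul u v1) + oRe (omul u v2) + oRe (omul u v3).
Proof. by rewrite !mulDr !ReD. Qed.

Opaque omul oadd oconj oscale dd oassoc osub oIm oRe cf onorm2 odot.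

Theorem mainTheorem6 (R : realFieldType) (p m n : R) (a b c x y z lam : oct R) :
  ~ (x = ozero /\ y = ozero /\ z = ozero) ->
  oadd (oadd (oscale p x) (omul a y)) (omul (oconj b) z) = omul x lam ->
  oadd (oadd (omul (oconj a) x) (oscale m y)) (omul c z) = omul y lam ->
  oadd (oadd (omul b x) (omul (oconj c) y)) (oscale n z) = omul z lam ->
  let S := oadd (oadd (oassoc x a y) (oassoc z b x)) (oassoc y c z) in
  let N := onorm2 x + onorm2 y + onorm2 z in
  [/\ oIm lam = oscale N^-1 S,
      onorm2 x + onorm2 y != onorm2 z ->
        oRe lam = (p * onorm2 x + m * onorm2 y - n * onorm2 z
                   + 2 * odot x (omul a y))
                  / (onorm2 x + onorm2 y - onorm2 z)
    & N = 1 -> oIm lam = S].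
Proof.
move=> nz H1 H2 H3 S N.
have hx := onorm2_ge0 x; have hy := onorm2_ge0 y; have hz := onorm2_ge0 z.
have N0 : N != 0.
  apply/eqP => h; apply: nz; rewrite /N in h.
  split; [|split]; apply: onorm2_eq0; lra.
have Ex : oadd (oadd (dd (omul (oconj x) (oscale p x))) (dd (omul (oconj x) (omul a y)))) (dd (omul (oconj x) (omul (oconj b) z))) = oscale (onorm2 x) (dd lam).
  rewrite -[RHS]ddF1 -[in RHS]H1 [RHS]expand3; reflexivity.
have Ey : oadd (oadd (dd (omul (oconj y) (omul (oconj a) x))) (dd (omul (oconj y) (oscale m y)))) (dd (omul (oconj y) (omul c z))) = oscale (onorm2 y) (dd lam).
  rewrite -[RHS]ddF1 -[in RHS]H2 [RHS]expand3; reflexivity.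
have Ez : oadd (oadd (dd (omul (oconj z) (omul b x))) (dd (omul (oconj z) (omul (oconj c) y)))) (dd (omul (oconj z) (oscale n z))) = oscale (onorm2 z) (dd lam).
  rewrite -[RHS]ddF1 -[in RHS]H3 [RHS]expand3; reflexivity.
rewrite ddsc in Ex; rewrite ddsc in Ey; rewrite ddsc in Ez.

have key : forall k, N * cf k (dd lam) = 2 * cf k S.
  move=> k.
  have := congr1 (cf k) Ex; have := congr1 (cf k) Ey; have := congr1 (cf k) Ez.
  have := pairL x a y k; have := pairL z b x k; have := pairL y c z k.
  rewrite /S /N !cf_scale !cf_add !cf_zero.
  move=> e1 e2 e3 e4 e5 e6; rewrite !mulrDl. lra.

have part1 : oIm lam = oscale N^-1 S.
  apply: oct_ext => k _; rewrite oIm_cf cf_scale.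
  have -> : cf k (dd lam) = N^-1 * (2 * cf k S) by rewrite -key mulKf.
  rewrite mulrCA; congr (_ * _); rewrite mulrA mulVf ?mul1r //.
  by rewrite pnatr_eq0.

split.
- exact: part1.
- move=> hD.
  have Rx : oRe (omul (oconj x) (oscale p x)) + oRe (omul (oconj x) (omul a y)) + oRe (omul (oconj x) (omul (oconj b) z)) = onorm2 x * oRe lam.
    rewrite -[RHS]ReF1 -[in RHS]H1 [RHS]expandRe; reflexivity.
  have Ry : oRe (omul (oconj y) (omul (oconj a) x)) + oRe (omul (oconj y) (oscale m y)) + oRe (omul (oconj y) (omul c z)) = onorm2 y * oRe lam.
    rewrite -[RHS]ReF1 -[in RHS]H2 [RHS]expandRe; reflexivity.
  have Rz : oRe (omul (oconj z) (omul b x)) + oRe (omul (oconj z) (omul (oconj c) y)) + oRe (omul (oconj z) (oscale n z)) = onorm2 z * oRe lam.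
    rewrite -[RHS]ReF1 -[in RHS]H3 [RHS]expandRe; reflexivity.
 
  have s1 := Resc p x; have s2 := Resc m y; have s3 := Resc n z.
  have w1 := Re_swap x b z; have w2 := Re_swap z c y.
  have d1 := Re_dot1 x a y; have d2 := Re_dot2 x a y.
  have hD' : onorm2 x + onorm2 y - onorm2 z != 0 by rewrite subr_eq0.
  apply: (canRL (mulfK hD')).
 
  rewrite [LHS]mulrBr [oRe lam * (_ + _)]mulrDr.
  clear Ex Ey Ez key part1 H1 H2 H3 hD hD' nz N0.
  move: Rx Ry Rz s1 s2 s3 w1 w2 d1 d2 hx hy hz.
  generalize (oRe (omul (oconj x) (oscale p x))) as A1.
  generalize (oRe (omul (oconj x) (omul a y))) as A2.
  generalize (oRe (omul (oconj x) (omul (oconj b) z))) as A3.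
  generalize (oRe (omul (oconj y) (omul (oconj a) x))) as B1.
  generalize (oRe (omul (oconj y) (oscale m y))) as B2.
  generalize (oRe (omul (oconj y) (omul c z))) as B3.
  generalize (oRe (omul (oconj z) (omul b x))) as C1.
  generalize (oRe (omul (oconj z) (omul (oconj c) y))) as C2.
  generalize (oRe (omul (oconj z) (oscale n z))) as C3.
  generalize (odot x (omul a y)) as D.
  generalize (oRe lam) as L.
  generalize (onorm2 x) as nx. generalize (onorm2 y) as ny. generalize (onorm2 z) as nz.
 
  move=> nz ny nx L D C3 C2 C1 B3 B2 B1 A3 A2 A1 Rx Ry Rz s1 s2 s3 w1 w2 d1 d2 _ _ _.
 
  rewrite (mulrC L nx) (mulrC L ny) (mulrC L nz) -Rx -Ry -Rz s1 s2 s3 w1 w2 d1 d2.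
 
  clear S N. ring.
- move=> N1. rewrite part1. rewrite N1 invr1. apply: oct_ext => k _. rewrite cf_scale mul1r. reflexivity.
Qed.
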